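(* Let $(R,[\cdot_\lambda\cdot],\alpha,\beta)$ be a BiHom-Lie conformal superalgebra and let $\alpha',\beta':R\to R$ be two even homomorphisms of conformal algebras (i.e. linear maps commuting with $\partial$ and satisfying $\alpha'([a_\lambda b])=[\alpha'(a)_\lambda\alpha'(b)]$, $\beta'([a_\lambda b])=[\beta'(a)_\lambda\beta'(b)]$) such that any two of the maps $\alpha,\beta,\alpha',\beta'$ commute. Then $(R,[\cdot_\lambda\cdot]',\alpha\circ\alpha',\beta\circ\beta')$, where $[a_\lambda b]'=[\alpha'(a)_\lambda\beta'(b)]$, is a BiHom-Lie conformal superalgebra.
   Context: All spaces are over $\mathbb{C}$. For a $\mathbb{C}[\partial]$-module $V$, $V[\lambda]=\mathbb{C}[\lambda]\otimes V$. $|a|$ denotes the parity of a homogeneous element. In $[x_{-\lambda-\partial}y]$ one writes $[x_\lambda y]=\sum_n\lambda^nc_n$ and replaces $\lambda$ by $-\lambda-\partial$, $\partial$ acting on the $c_n$. A BiHom-Lie conformal superalgebra $(R,[\cdot_\lambda\cdot],\alpha,\beta)$ is a $\mathbb{Z}_2$-graded $\mathbb{C}[\partial]$-module $R=R_0\oplus R_1$ with two commuting linear maps $\alpha,\beta:R\to R$ and a $\mathbb{C}$-linear map $R\otimes R\to R[\lambda]$, $a\otimes b\mapsto[a_\lambda b]$, with $[R_{i\,\lambda}R_j]\subseteq R_{i+j}[\lambda]$, such that for all homogeneous $a,b,c\in R$: (1) $\alpha\partial=\partial\alpha$, $\beta\partial=\partial\beta$; (2) $\alpha([a_\lambda b])=[\alpha(a)_\lambda\alpha(b)]$,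 $\beta([a_\lambda b])=[\beta(a)_\lambda\beta(b)]$; (3) $[(\partial a)_\lambda b]=-\lambda[a_\lambda b]$, $[a_\lambda(\partial b)]=(\partial+\lambda)[a_\lambda b]$; (4) $[\beta(a)_\lambda\alpha(b)]=-(-1)^{|a||b|}[\beta(b)_{-\lambda-\partial}\alpha(a)]$; (5) $[\alpha\beta(a)_\lambda[b_\mu c]]=[[\beta(a)_\lambda b]_{\lambda+\mu}\beta(c)]+(-1)^{|a||b|}[\beta(b)_\mu[\alpha(a)_\lambda c]]$. *)

(* Defs.v *)
From mathcomp Require Import all_boot all_algebra.
From mathcomp Require Import complex.
From mathcomp Require Import Rstruct.

Set Implicit Arguments.
Unset Strict Implicit.
Unset Printing Implicit Defensive.

Import GRing.Theory.
Local Open Scope ring_scope.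

Definition Cc : fieldType := complex Rdefinitions.R.

Section BiHomLCSA.
Variables (K : fieldType) (V : lmodType K).

(* Elements of V[lambda] are represented by their (finite) coefficient list:
   s represents  sum_n lambda^n s`_n . Two such lists represent the same
   polynomial iff all their coefficients (nth 0) agree. *)
Definition coef (s : seq V) (n : nat) : V := nth 0 s n.

Definition is_lin (f : V -> V) : Prop :=
  forall (c : K) (x y : V), f (c *: x + y) = c *: f x + f y.

(* Z_2-graded C[d]-module: d linear, V = V_0 (+) V_1 with each V_i a
   C[d]-submodule. [P p x] means x is homogeneous of parity p
   (false = even = 0, true = odd = 1). *)
Definition Z2graded_Cd_module (d : V -> V) (P : bool -> V -> Prop) : Prop :=
  [/\ is_lin d,
      (forall p, P p 0 /\ forall (c : K) x y, P p x -> P p y -> P p (c *: x + y)),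
      (forall p x, P p x -> P p (d x)),
      (forall v, exists v0 v1, [/\ P false v0, P true v1 & v = v0 + v1]) &
      (forall v, P false v -> P true v -> v = 0)].

(* [x_{-lambda-d} y] : given s = [x_lambda y] = sum_n lambda^n c_n, the
   coefficient of lambda^k in sum_n (-lambda-d)^n c_n, i.e.
   sum_n (-1)^n binom(n,k) d^(n-k) c_n. *)
Definition subst_neg (d : V -> V) (s : seq V) (k : nat) : V :=
  \sum_(n < size s) (((-1) ^+ n * ('C(n, k))%:R) *: iter (n - k) d (coef s n)).

(* Coefficient of lambda^i mu^j in [x_lambda [b_mu c]] where s = [b_mu c]. *)
Definition jac_left (br : V -> V -> seq V) (x : V) (s : seq V) (i j : nat) : V :=
  coef (br x (coef s j)) i.

(* Coefficient of lambda^i mu^j in [e_{lambda+mu} y] where e = [a_lambda b]: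
   sum_n lambda^n sum_m (lambda+mu)^m [e_n _ y]_m. *)
Definition jac_mid (br : V -> V -> seq V) (e : seq V) (y : V) (i j : nat) : V :=
  \sum_(n < i.+1) (('C(i - n + j, j))%:R *: coef (br (coef e n) y) (i - n + j)).

(* Coefficient of lambda^i mu^j in [x_mu [a_lambda c]] where g = [a_lambda c]. *)
Definition jac_right (br : V -> V -> seq V) (x : V) (g : seq V) (i j : nat) : V :=
  coef (br x (coef g i)) j.

Definition BiHomLieConfSuperalg (d : V -> V) (P : bool -> V -> Prop)
    (br : V -> V -> seq V) (al be : V -> V) : Prop :=
  [/\ Z2graded_Cd_module d P,
      is_lin al /\ is_lin be /\ (forall x, al (be x) = be (al x)),
      (forall (c : K) x y b n,
          coef (br (c *: x + y) b) n = c *: coef (br x b) n + coef (br y b) n) /\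
      (forall (c : K) a x y n,
          coef (br a (c *: x + y)) n = c *: coef (br a x) n + coef (br a y) n),
      (forall p q a b n, P p a -> P q b -> P (p (+) q) (coef (br a b) n)) &
      (forall pa pb pc a b c, P pa a -> P pb b -> P pc c ->
        [/\
            al (d a) = d (al a) /\ be (d a) = d (be a),
            (forall n, al (coef (br a b) n) = coef (br (al a) (al b)) n) /\
            (forall n, be (coef (br a b) n) = coef (br (be a) (be b)) n),
            (forall n, coef (br (d a) b) n = - coef (0 :: br a b) n) /\
            (forall n, coef (br a (d b)) n = d (coef (br a b) n) + coef (0 :: br a b) n),
            (forall k, coef (br (be a) (al b)) k =
                 - ((-1) ^+ (pa && pb) *: subst_neg d (br (be b) (al a)) k)) &
            (forall i j, jac_left br (al (be a)) (br b c) i j =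
                 jac_mid br (br (be a) b) (be c) i j
                 + (-1) ^+ (pa && pb) *: jac_right br (be b) (br (al a) c) i j)])].

End BiHomLCSA.

(* Main.v *)
Require Import Defs.
From mathcomp Require Import all_boot all_algebra.
From mathcomp Require Import complex.
Import GRing.Theory.
Local Open Scope ring_scope.

Lemma jac_mid_br' (V : lmodType Cc) (br : V -> V -> seq V) (f g : V -> V)
  (Hf : forall a b n, f (coef (br a b) n) = coef (br (f a) (f b)) n) a b y i j :
  jac_mid (fun a b => br (f a) (g b)) (br (f a) (g b)) y i j
  = jac_mid br (br (f (f a)) (f (g b))) (g y) i j.
Proof. by rewrite /jac_mid; apply: eq_bigr => n _; rewrite Hf. Qed.

Ltac norm H1 H2 H3 H4 H5 H6 :=
  do 40 try (first [rewrite H1 | rewrite H2 | rewrite H3 | rewrite H4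
                | rewrite H5 | rewrite H6]).

Theorem mainTheorem2 (V : lmodType Cc) (d : V -> V) (P : bool -> V -> Prop)
    (br : V -> V -> seq V) (al be al' be' : V -> V) :
  BiHomLieConfSuperalg d P br al be ->
  (* al', be' : even homomorphisms of conformal algebras *)
  is_lin al' -> is_lin be' ->
  (forall p x, P p x -> P p (al' x)) -> (forall p x, P p x -> P p (be' x)) ->
  (forall x, al' (d x) = d (al' x)) -> (forall x, be' (d x) = d (be' x)) ->
  (forall a b n, al' (coef (br a b) n) = coef (br (al' a) (al' b)) n) ->
  (forall a b n, be' (coef (br a b) n) = coef (br (be' a) (be' b)) n) ->
  (* any two of al, be, al', be' commute *)
  (forall x, al (be x) = be (al x)) ->
  (forall x, al (al' x) = al' (al x)) ->
  (forall x, al (be' x) = be' (al x)) ->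
  (forall x, be (al' x) = al' (be x)) ->
  (forall x, be (be' x) = be' (be x)) ->
  (forall x, al' (be' x) = be' (al' x)) ->
  BiHomLieConfSuperalg d P (fun a b => br (al' a) (be' b))
    (fun x => al (al' x)) (fun x => be (be' x)).
Proof.
move=> [Hgr [Hlal [Hlbe Hcab0]] [Hbl1 Hbl2] Hpar Hax] Hlal' Hlbe' Hpal' Hpbe'
  Hal'd Hbe'd Hal'br Hbe'br H1 H2 H3 H4 H5 H6.
split.
- exact: Hgr.
- split; [|split].
  + by move=> c x y; rewrite Hlal' Hlal.
  + by move=> c x y; rewrite Hlbe' Hlbe.
  + by move=> x; norm H1 H2 H3 H4 H5 H6.
- split.
  + by move=> c x y b n; rewrite Hlal' Hbl1.
  + by move=> c a x y n; rewrite Hlbe' Hbl2.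
- by move=> p q a b n Pa Pb; apply: Hpar; [apply: Hpal'|apply: Hpbe'].
- move=> pa pb pc a b c Pa Pb Pc.
  have Pa' := Hpal' _ _ Pa.
  split.
  + have [[h1 h2] _ _ _ _] := Hax _ _ _ _ _ _ Pa' Pa' Pa'.
    split.
    * by rewrite Hal'd h1.
    * have [[_ h3] _ _ _ _] := Hax _ _ _ _ _ _ (Hpbe' _ _ Pa) Pa' Pa'.
      rewrite Hbe'd h3; norm H1 H2 H3 H4 H5 H6; done.
  + split=> n.
    * rewrite Hal'br.
      have [_ [h _] _ _ _] := Hax _ _ _ _ _ _ (Hpal' _ _ Pa') (Hpal' _ _ (Hpbe' _ _ Pb)) Pa'.
      rewrite h; norm H1 H2 H3 H4 H5 H6; done.
    * rewrite Hbe'br.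
      have [_ [_ h] _ _ _] := Hax _ _ _ _ _ _ (Hpbe' _ _ Pa') (Hpbe' _ _ (Hpbe' _ _ Pb)) Pa'.
      rewrite h; norm H1 H2 H3 H4 H5 H6; done.
  + have [_ _ [h1 h2] _ _] := Hax _ _ _ _ _ _ Pa' (Hpbe' _ _ Pb) Pa'.
    split=> n.
    * by rewrite Hal'd h1.
    * by rewrite Hbe'd h2.
  + move=> k.
    have [_ _ _ h _] := Hax _ _ _ _ _ _ (Hpal' _ _ (Hpbe' _ _ Pa)) (Hpbe' _ _ (Hpal' _ _ Pb)) Pa'.
    have := h k; norm H1 H2 H3 H4 H5 H6; move=> ->; done.
  + move=> i j.
    have [_ _ _ _ h] := Hax _ _ _ _ _ _ (Hpal' _ _ (Hpal' _ _ (Hpbe' _ _ Pa)))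
       (Hpbe' _ _ (Hpal' _ _ Pb)) (Hpbe' _ _ (Hpbe' _ _ Pc)).
    have := h i j.
    rewrite (@jac_mid_br' _ _ _ _ Hal'br) /jac_left /jac_right.
    rewrite !Hbe'br.
    norm H1 H2 H3 H4 H5 H6; move=> ->; done.
Qed.
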